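(* Consider a network of $n$ parallel roads (indexed by $i\in[n]$) shared by $m$ vehicle types (indexed by $j\in[m]$), where vehicle type $j$ has total demand $\bar f^j\ge 0$. A routing is a vector $f=(f^j_i)_{i\in[n],j\in[m]}$; it is feasible if $f^j_i\ge 0$ for all $i,j$ and $\sum_{i\in[n]} f^j_i=\bar f^j$ for all $j$. The latency of road $i$ is $\ell_i(f)=b_i+\sum_{j\in[m]} a^j_i f^j_i$ with constants $a^j_i\ge 0$, $b_i\ge 0$, and the social cost is $J(f)=\sum_{i\in[n]}\big(\sum_{j\in[m]} f^j_i\big)\ell_i(f)$. Let $\mathcal F^*$ be the set of feasible routings minimizing $J$. For a routing $f$, let $G(f)$ be the bipartite graph whose node set consists of the $n$ roads and the $m$ vehicle types, with an edge between road $i$ and vehicle type $j$ if and only if $f^j_i>0$. Then there exists $f\in\mathcal F^*$ such that $G(f)$ is acyclic.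
   Context: Parallel-road network with multiple vehicle types: flow $f^j_i$ of type $j$ on road $i$; each road's latency is affine in the flows of all vehicle types, with type-dependent coefficients $a^j_i$. The social cost is the total latency experienced by all flow. *)

(* Defs.v *)
From mathcomp Require Import all_boot all_order all_algebra.
From mathcomp Require Import reals.
Set Implicit Arguments. Unset Strict Implicit. Unset Printing Implicit Defensive.
Import Order.TTheory GRing.Theory Num.Theory.
Local Open Scope ring_scope.

(* A routing: f i j = flow of vehicle type j on road i. *)
Definition routing (R : realType) (n m : nat) := 'I_n -> 'I_m -> R.

Definition feasible (R : realType) (n m : nat) (fbar : 'I_m -> R)
  (f : routing R n m) : Prop :=
  (forall i j, 0 <= f i j) /\ (forall j, \sum_(i < n) f i j = fbar j).

Definition latency (R : realType) (n m : nat) (a : 'I_n -> 'I_m -> R)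
  (b : 'I_n -> R) (f : routing R n m) (i : 'I_n) : R :=
  b i + \sum_(j < m) a i j * f i j.

Definition social_cost (R : realType) (n m : nat) (a : 'I_n -> 'I_m -> R)
  (b : 'I_n -> R) (f : routing R n m) : R :=
  \sum_(i < n) (\sum_(j < m) f i j) * latency a b f i.

Definition optimal (R : realType) (n m : nat) (fbar : 'I_m -> R)
  (a : 'I_n -> 'I_m -> R) (b : 'I_n -> R) (f : routing R n m) : Prop :=
  feasible fbar f /\
  forall g : routing R n m, feasible fbar g -> social_cost a b f <= social_cost a b g.

Definition Gf (R : realType) (n m : nat) (f : routing R n m) :
  rel ('I_n + 'I_m)%type :=
  fun u v => match u, v with
             | inl i, inr j => 0 < f i j
             | inr j, inl i => 0 < f i j
             | _, _ => false
             end.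

(* A simple graph (symmetric relation e) is acyclic if it contains no cycle:
   no duplicate-free closed walk v_0 ... v_{k-1} v_0 with k >= 3 vertices. *)
Definition acyclic (T : finType) (e : rel T) : Prop :=
  forall s : seq T, uniq s -> (3 <= size s)%N -> ~~ cycle e s.

(* Main.v *)
Require Import Defs.
From mathcomp Require Import all_boot all_order all_algebra.
From mathcomp Require Import reals.
From mathcomp Require Import all_classical all_reals all_analysis.
From Stdlib Require Import Classical.
Set Implicit Arguments. Unset Strict Implicit. Unset Printing Implicit Defensive.
Import Order.TTheory GRing.Theory Num.Theory.
Import numFieldNormedType.Exports.
Local Open Scope ring_scope.
Section Comb.
Variables (R : realType) (n m : nat).
Implicit Types (f : routing R n m) (s : seq ('I_n + 'I_m)%type).

Lemma next_prev_eq s x y : uniq s ->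
  (y \in s) && (next s y == x) = (x \in s) && (prev s x == y).
Proof.
move=> us; apply/andP/andP => [[ys /eqP <-]|[xs /eqP <-]].
  by rewrite mem_next ys prev_next.
by rewrite mem_prev xs next_prev.
Qed.

Definition isinr (u : ('I_n + 'I_m)%type) := if u is inr _ then true else false.
Definition isinl (u : ('I_n + 'I_m)%type) := if u is inl _ then true else false.

Lemma sum_inr (c : bool) (u : ('I_n + 'I_m)%type) :
  \sum_(j < m) (c && (u == inr j))%:R = (c && isinr u)%:R :> R.
Proof.
case: u => [i|j0] /=.
  by rewrite andbF big1 // => j _; rewrite andbF.
rewrite (bigD1 j0) //= eqxx big1 ?addr0 // => j hj.
by rewrite (inj_eq (@inr_inj _ _)) eq_sym (negbTE hj) andbF.
Qed.

Lemma sum_inl (c : bool) (u : ('I_n + 'I_m)%type) :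
  \sum_(i < n) (c && (u == inl i))%:R = (c && isinl u)%:R :> R.
Proof.
case: u => [i0|j] /=; last by rewrite andbF big1 // => i _; rewrite andbF.
rewrite (bigD1 i0) //= eqxx big1 ?addr0 // => i hi.
by rewrite (inj_eq (@inl_inj _ _)) eq_sym (negbTE hi) andbF.
Qed.

Lemma Gf_kind f x y : Gf f x y -> (isinl x = isinr y) /\ (isinr x = isinl y).
Proof. by case: x => ?; case: y. Qed.

Definition dcyc s : routing R n m := fun i j =>
  ((inl i \in s) && (next s (inl i) == inr j))%:R -
  ((inr j \in s) && (next s (inr j) == inl i))%:R.

Variables (f : routing R n m) (s : seq ('I_n + 'I_m)%type).
Hypotheses (us : uniq s) (ss : (3 <= size s)%N) (cs : cycle (Gf f) s).

Lemma dcyc_row i : \sum_j dcyc s i j = 0.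
Proof.
rewrite /dcyc sumrB.
under [X in _ - X]eq_bigr do rewrite next_prev_eq //.
rewrite sum_inr sum_inr.
case si: (inl i \in s); last by rewrite /= subrr.
have [h1 _] := Gf_kind (next_cycle cs si).
have [_ h2] := Gf_kind (prev_cycle cs si).
by rewrite -h1 -h2 subrr.
Qed.

Lemma dcyc_col j : \sum_i dcyc s i j = 0.
Proof.
rewrite /dcyc sumrB.
under [X in X - _]eq_bigr do rewrite next_prev_eq //.
rewrite sum_inl sum_inl.
case si: (inr j \in s); last by rewrite /= subrr.
have [_ h1] := Gf_kind (next_cycle cs si).
have [h2 _] := Gf_kind (prev_cycle cs si).
by rewrite -h1 -h2 subrr.
Qed.

Lemma dcyc_supp i j : dcyc s i j != 0 -> 0 < f i j.
Proof.
rewrite /dcyc; case h1: (_ && _); case h2: (_ && _) => //=.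
- by case/andP: h1 => si /eqP e; have := next_cycle cs si; rewrite e.
- by case/andP: h1 => si /eqP e; have := next_cycle cs si; rewrite e.
- by case/andP: h2 => si /eqP e; have := next_cycle cs si; rewrite e.
- by rewrite subrr eqxx.
Qed.

Lemma dcyc_nz : exists i j, dcyc s i j != 0.
Proof.
case: s us ss cs => [|x [|y [|z r]]] //= u3 _ c3.
have [yx zx] : (y == x) = false /\ z != x.
  move: u3; rewrite /= !inE => /and4P [h1 _ _ _].
  by split; apply/negP => /eqP e; move: h1; rewrite e eqxx ?orbT.
have nx : next [:: x, y, z & r] x = y by rewrite /next /= eqxx.
have ny : next [:: x, y, z & r] y = z by rewrite /next /= yx eqxx.
have xy : Gf f x y by move: c3; rewrite /= => /andP [].
clear u3 c3 yx; case: x y xy nx ny zx => [i|j] [i'|j'] xy nx ny zx //.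
- exists i, j'; rewrite /dcyc nx ny eqxx (negbTE zx) mem_head andbF andbT.
  by rewrite subr0 oner_eq0.
- exists i', j; rewrite /dcyc nx ny eqxx (negbTE zx) mem_head andbF andbT.
  by rewrite sub0r oppr_eq0 oner_eq0.
Qed.
End Comb.

Section Red.
Variables (R : realType) (n m : nat) (fbar : 'I_m -> R)
  (a : 'I_n -> 'I_m -> R) (b : 'I_n -> R).

Definition Cdir (f e : routing R n m) :=
  \sum_(i < n) (\sum_(j < m) f i j) * (\sum_(j < m) a i j * e i j).

Lemma cost_line (f e : routing R n m) (t : R) :
  (forall i, \sum_j e i j = 0) ->
  social_cost a b (fun i j => f i j + t * e i j) = social_cost a b f + t * Cdir f e.
Proof.
move=> hrow; rewrite /social_cost /latency /Cdir mulr_sumr -big_split /=.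
apply: eq_bigr => i _; rewrite big_split /= -mulr_sumr hrow mulr0 addr0.
have -> : \sum_(j < m) a i j * (f i j + t * e i j) =
    \sum_(j < m) (a i j * f i j + t * (a i j * e i j)).
  by apply: eq_bigr => j _; rewrite mulrDr mulrCA.
rewrite big_split /= -mulr_sumr.
by rewrite addrA mulrDr mulrCA.
Qed.

Lemma neg_exists (F : 'I_n -> R) k : \sum_i F i = 0 -> 0 < F k -> exists k', F k' < 0.
Proof.
move=> h0 hk; apply: NNPP => hn.
have : 0 < \sum_i F i.
  rewrite (bigD1 k) //= ltr_wpDr //; apply: sumr_ge0 => i _.
  by rewrite leNgt; apply/negP => hi; apply: hn; exists i.
by rewrite h0 ltxx.
Qed.

Definition supp (f : routing R n m) := [set p : 'I_n * 'I_m | 0 < f p.1 p.2].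

Lemma reduce0 (f e : routing R n m) : optimal fbar a b f ->
  (forall j, \sum_i e i j = 0) -> (forall i, \sum_j e i j = 0) ->
  (forall i j, e i j != 0 -> 0 < f i j) -> (exists i j, e i j != 0) ->
  Cdir f e <= 0 ->
  exists g, optimal fbar a b g /\ (#|supp g| < #|supp f|)%N.
Proof.
move=> [[fpos fsum] fopt] hcol hrow hsupp [i1 [j1 nz1]] hC.
have [p1 hp1] : exists p : 'I_n * 'I_m, e p.1 p.2 < 0.
  case: (ltrgtP (e i1 j1) 0) => [h|h|h]; first by exists (i1, j1).
    by have [k hk] := neg_exists (hcol j1) h; exists (k, j1).
  by rewrite h eqxx in nz1.
pose r (p : 'I_n * 'I_m) := f p.1 p.2 / - e p.1 p.2.
have [p0 hp0 hmin] := arg_minP (P := [pred p : 'I_n * 'I_m | e p.1 p.2 < 0]) r hp1.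
rewrite /= in hp0.
have f0 : 0 < f p0.1 p0.2 by apply: hsupp; rewrite lt_eqF.
pose t := r p0.
have t0 : 0 <= t by rewrite /t /r divr_ge0 // ?ltW // oppr_gt0.
pose g := fun i j => f i j + t * e i j.
have gpos : forall i j, 0 <= g i j.
  move=> i j; rewrite /g; case: (ltP (e i j) 0) => hij.
    have := hmin (i, j) hij; rewrite /= /r ler_pdivlMr ?oppr_gt0 //.
    by rewrite mulrN -subr_ge0 opprK.
  by rewrite addr_ge0 // mulr_ge0.
exists g; split.
  split; first split.
  - exact: gpos.
  - by move=> j; rewrite /g big_split /= -mulr_sumr hcol mulr0 addr0 fsum.
  - move=> h hf; apply: le_trans (fopt h hf).
    rewrite /g cost_line // gerDl; exact: mulr_ge0_le0.
apply: fintype.proper_card; apply/fintype.properP; split.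
  apply/fintype.subsetP => [[i j]]; rewrite !inE /= => hg.
  case: (ltP 0 (f i j)) => // hf.
  have fz : f i j = 0 by apply/eqP; rewrite eq_le hf fpos.
  have ez : e i j = 0 by apply/eqP; apply: contraTT hf => /hsupp; rewrite -ltNge.
  by move: hg; rewrite /g fz ez mulr0 addr0 ltxx.
exists p0; rewrite !inE //= /g /t /r.
have en : e p0.1 p0.2 != 0 by rewrite lt_eqF.
by rewrite invrN mulrN mulNr -mulrA mulVf // mulr1 subrr ltxx.
Qed.
Lemma reduce (f e : routing R n m) : optimal fbar a b f ->
  (forall j, \sum_i e i j = 0) -> (forall i, \sum_j e i j = 0) ->
  (forall i j, e i j != 0 -> 0 < f i j) -> (exists i j, e i j != 0) ->
  exists g, optimal fbar a b g /\ (#|supp g| < #|supp f|)%N.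
Proof.
move=> fo hcol hrow hsupp [i1 [j1 nz]].
case: (leP (Cdir f e) 0) => hC; first by apply: (reduce0 fo) => //; exists i1, j1.
apply: (reduce0 (e := fun i j => - e i j)) => //.
- by move=> j; rewrite sumrN hcol oppr0.
- by move=> i; rewrite sumrN hrow oppr0.
- by move=> i j; rewrite oppr_eq0; apply: hsupp.
- by exists i1, j1; rewrite oppr_eq0.
have -> : Cdir f (fun i j => - e i j) = - Cdir f e.
  rewrite /Cdir -sumrN; apply: eq_bigr => i _; rewrite -mulrN -sumrN.
  by congr (_ * _); apply: eq_bigr => j _; rewrite mulrN.
by rewrite oppr_le0 ltW.
Qed.

Lemma step (f : routing R n m) : optimal fbar a b f -> ~ acyclic (Gf f) ->
  exists g, optimal fbar a b g /\ (#|supp g| < #|supp f|)%N.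
Proof.
move=> fo nac.
have [s [us ss cs]] : exists s, [/\ uniq s, (3 <= size s)%N & cycle (Gf f) s].
  apply: NNPP => H; apply: nac => s us ss; apply/negP => cs; by apply: H; exists s; split.
exact: (@reduce f (dcyc R s) fo (dcyc_col us cs) (dcyc_row us cs) (dcyc_supp cs) (dcyc_nz us ss cs)).
Qed.

Lemma main_ind k (f : routing R n m) : optimal fbar a b f -> (#|supp f| <= k)%N ->
  exists g, optimal fbar a b g /\ acyclic (Gf g).
Proof.
elim: k f => [|k IH] f fo hk; (case: (classic (acyclic (Gf f))) => [ac|nac]; first by exists f);
  have [g [go hg]] := step fo nac.
  by move: (leq_trans hg hk).
by apply: (IH g go); rewrite -ltnS (leq_trans hg hk).
Qed.
End Red.

Local Open Scope classical_set_scope.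

Lemma cont_sum (R : realType) N (I : Type) (r : seq I) (F : I -> 'rV[R]_N -> R) :
  (forall i, continuous (F i)) -> continuous (fun v => \sum_(i <- r) F i v).
Proof.
move=> hF; elim: r => [|x r IH].
  under eq_fun do rewrite big_nil. exact: cst_continuous.
under eq_fun do rewrite big_cons.
move=> v; exact: (continuousD (hF x v) (IH v)).
Qed.

Lemma cont_mul (R : realType) N (f g : 'rV[R]_N -> R) : continuous f -> continuous g ->
  continuous (fun v => f v * g v).
Proof. by move=> hf hg v; apply: (continuousM (hf v) (hg v)). Qed.

Lemma cont_add (R : realType) N (f g : 'rV[R]_N -> R) : continuous f -> continuous g ->
  continuous (fun v => f v + g v).
Proof. by move=> hf hg v; apply: (continuousD (hf v) (hg v)). Qed.

Definition phi (R : realType) n m (v : 'rV[R]_(n * m)) : routing R n m :=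
  fun i j => v ord0 (mxvec_index i j).

Lemma phiK (R : realType) n m (g : routing R n m) :
  phi (mxvec (\matrix_(i, j) g i j)) = g.
Proof.
by apply/funext => i; apply/funext => j; rewrite /phi mxvecE mxE.
Qed.

Lemma cont_phi (R : realType) n m i j : continuous (fun v : 'rV[R]_(n * m) => phi v i j).
Proof. exact: coord_continuous. Qed.

Lemma le_sum_one (R : realType) n (F : 'I_n -> R) i :
  (forall k, 0 <= F k) -> F i <= \sum_k F k.
Proof.
move=> h; rewrite (bigD1 i) //= lerDl; apply: sumr_ge0 => k _; exact: h.
Qed.

Lemma exists_opt (R : realType) (n m : nat) (hn : (0 < n)%N)
  (fbar : 'I_m -> R) (a : 'I_n -> 'I_m -> R) (b : 'I_n -> R)
  (hfbar : forall j, 0 <= fbar j) :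
  exists f : routing R n m, optimal fbar a b f.
Proof.
pose i0 : 'I_n := Ordinal hn.
pose A := [set v : 'rV[R]_(n * m) | feasible fbar (phi v)].
pose S := \sum_j fbar j.
have A0 : A !=set0.
  exists (mxvec (\matrix_(i, j) (if i == i0 then fbar j else 0))).
  rewrite /A /= phiK; split => [i j|j]; first by case: eqP.
  by rewrite (bigD1 i0) //= big1 ?addr0 // => i /negbTE ->.
have cA : compact A.
  have hB := rV_compact (fun _ : 'I_(n * m) => @segment_compact R 0 S). apply: (subclosed_compact _ hB).
    have -> : A = (\bigcap_(p in [set: 'I_n * 'I_m])
        ((fun v => phi v p.1 p.2) @^-1` [set x | 0 <= x])) `&`
      (\bigcap_(j in [set: 'I_m])
        ((fun v => \sum_i phi v i j) @^-1` [set x | x = fbar j])).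
      apply/seteqP; split => v /=.
        by case=> h1 h2; split => [[i j] _|j _] /=; [apply: h1|apply: h2].
      by case=> h1 h2; split => [i j|j]; [apply: (h1 (i, j))|apply: h2].
    apply: closedI; apply: closed_bigI => p _; apply: preimage_closed.
    - by move=> v _; apply: cont_phi.
    - exact: closed_ge.
    - move=> v _; apply: cont_sum => i; exact: cont_phi.
    - exact: closed_eq.
  move=> v [h1 h2] k; case/mxvec_indexP: k => i j /=.
  rewrite in_itv /=; apply/andP; split; first exact: h1.
  apply: (le_trans (y := fbar j)).
    rewrite -h2; change (phi v i j <= \sum_(i1 < n) phi v i1 j); apply: (@le_sum_one R n (fun k => phi v k j) i) => k; exact: h1.
  exact: (@le_sum_one R m fbar j hfbar).
have cf : {within A, continuous (fun v => social_cost a b (phi v))}.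
  apply: continuous_subspaceT; rewrite /social_cost /latency.
  apply: cont_sum => i; apply: cont_mul.
    apply: cont_sum => j; exact: cont_phi.
  apply: cont_add; first exact: cst_continuous.
  apply: cont_sum => j; apply: cont_mul; first exact: cst_continuous.
  exact: cont_phi.
have [c cA' minc] := compact_EVT_min A0 cA cf.
exists (phi c); split; first by rewrite inE in cA'.
move=> g fg; have := minc (mxvec (\matrix_(i, j) g i j)).
rewrite phiK; apply; rewrite inE /A /= phiK //.
Qed.

Local Close Scope classical_set_scope.

Theorem theorem1 (R : realType) (n m : nat) (hn : (0 < n)%N)
  (fbar : 'I_m -> R) (a : 'I_n -> 'I_m -> R) (b : 'I_n -> R)
  (hfbar : forall j, 0 <= fbar j)
  (ha : forall i j, 0 <= a i j) (hb : forall i, 0 <= b i) :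
  exists f : routing R n m, optimal fbar a b f /\ acyclic (Gf f).
Proof.
have [f fo] := exists_opt hn a b hfbar.
exact: (main_ind (k := #|supp f|) fo).
Qed.
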